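(* Let $S=G_2(q)$, where $q=3^f$ and $f>1$, and let $\phi$ be a field automorphism of $S$ of prime order. Let $r$ be a Zsigmondy prime divisor of $\Phi_2(q)=q+1$, i.e. a prime with the multiplicative order of $3$ modulo $r$ equal to $2f$, and let $R$ be a Sylow $r$-subgroup of $S$. Then $C_{\widehat{A}_0}(R)\le S$.
   Context: $\widehat{A}_0$ denotes the subgroup of $\mathrm{Aut}(S)$ generated by $S$ (identified with $\mathrm{Inn}(S)$) and all field automorphisms of $S$. *)

(* Defs.v *)
From HB Require Import structures.
From mathcomp Require Import all_boot all_order all_algebra all_fingroup all_solvable.
Set Implicit Arguments. Unset Strict Implicit. Unset Printing Implicit Defensive.
Import GRing.Theory.
Local Open Scope ring_scope.

(* G_2(q) realised as the automorphism group of the (split) octonion algebra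
   over a finite field F, acting on F^8 = 'rV[F]_8.  Basis e_0 (=1), e_1..e_7,
   e_i e_j = +- e_(i xor j) with the standard Fano-plane sign table, all
   structure constants in {0,1,-1}. *)

(* ordered pairs (i,j), i<>j in 1..7, with e_i e_j = + e_(i xor j):
   cyclic rotations of (1,2,3),(1,4,5),(1,7,6),(2,4,6),(2,5,7),(3,4,7),(3,6,5) *)
Definition oct_pos_pairs : seq (nat * nat) :=
  [:: (1,2); (2,3); (3,1); (1,4); (4,5); (5,1); (1,7); (7,6); (6,1);
      (2,4); (4,6); (6,2); (2,5); (5,7); (7,2); (3,4); (4,7); (7,3);
      (3,6); (6,5); (5,3)]%N.

Section Octonions.
Variable F : fieldType.

Definition oct_coef (i j k : 'I_8) : F :=
  if (k : nat) == Nat.lxor i j then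
    if (i == 0 :> nat) || (j == 0 :> nat) then 1
    else if i == j then -1
    else if ((i : nat), (j : nat)) \in oct_pos_pairs then 1 else -1
  else 0.

Definition omul (x y : 'rV[F]_8) : 'rV[F]_8 :=
  \row_k \sum_(i < 8) \sum_(j < 8) oct_coef i j k * x 0 i * y 0 j.
End Octonions.

Section G2.
Variable F : finFieldType.

Definition G2 : {set {perm 'rV[F]_8}} :=
  [set g : {perm 'rV[F]_8} |
     [forall a : F, forall x : 'rV[F]_8, forall y : 'rV[F]_8,
        g (a *: x + y) == a *: g x + g y]
  && [forall x : 'rV[F]_8, forall y : 'rV[F]_8,
        g (omul x y) == omul (g x) (g y)]].

(* the coordinatewise Frobenius a |-> a^3 (a singleton set in characteristic 3);
   conjugation by its powers induces the field automorphisms of G_2(F) *)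
Definition FrobSet : {set {perm 'rV[F]_8}} :=
  [set g : {perm 'rV[F]_8} |
     [forall x : 'rV[F]_8, g x == map_mx (fun a : F => a ^+ 3) x]].

Definition A0hat : {set {perm 'rV[F]_8}} := <<G2 :|: FrobSet>>%g.

Definition FieldAuts : {set {perm 'rV[F]_8}} := <<FrobSet>>%g.
End G2.

Definition zsigmondy_3_2f (f r : nat) : Prop :=
  prime r /\ 3 ^ (2 * f) = 1 %[mod r] /\
  (forall m, 0 < m < 2 * f -> 3 ^ m <> 1 %[mod r])%N.

(* Main.v *)
Require Import Defs.
From HB Require Import structures.
From mathcomp Require Import all_boot all_order all_algebra all_fingroup all_solvable all_field.
From mathcomp Require Import ring.
Set Implicit Arguments. Unset Strict Implicit. Unset Printing Implicit Defensive.
Import GRing.Theory.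

Local Open Scope ring_scope.
Notation "x '@@' i" := (x 0 (@Ordinal 8 i isT)) (at level 10, format "x @@ i").
Notation "M '@2' i j" := (M (@Ordinal 2 i isT) (@Ordinal 2 j isT))
  (at level 10, i at level 0, j at level 0, format "M @2 i j").

Lemma sum8 (R : nmodType) (G : 'I_8 -> R) : \sum_(i < 8) G i =
  G (@Ordinal 8 0 isT) + G (@Ordinal 8 1 isT) + G (@Ordinal 8 2 isT) + G (@Ordinal 8 3 isT) +
  G (@Ordinal 8 4 isT) + G (@Ordinal 8 5 isT) + G (@Ordinal 8 6 isT) + G (@Ordinal 8 7 isT).
Proof.
rewrite !big_ord_recl big_ord0 addr0 !addrA.
by repeat congr (_ + _); congr G; apply: val_inj.
Qed.

Lemma sum2 (R : nmodType) (G : 'I_2 -> R) : \sum_(i < 2) G i =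
  G (@Ordinal 2 0 isT) + G (@Ordinal 2 1 isT).
Proof.
rewrite !big_ord_recl big_ord0 addr0.
by repeat congr (_ + _); congr G; apply: val_inj.
Qed.

Lemma ord8P (P : 'I_8 -> Prop) :
  P (@Ordinal 8 0 isT) -> P (@Ordinal 8 1 isT) -> P (@Ordinal 8 2 isT) -> P (@Ordinal 8 3 isT) ->
  P (@Ordinal 8 4 isT) -> P (@Ordinal 8 5 isT) -> P (@Ordinal 8 6 isT) -> P (@Ordinal 8 7 isT) ->
  forall k, P k.
Proof.
move=> H0 H1 H2 H3 H4 H5 H6 H7 [m hn].
do 8 (case: m hn => [|m] hn; first by rewrite (bool_irrelevance hn isT)).
by exfalso; move: hn; rewrite !ltnS ltn0.
Qed.

Lemma ord2P (P : 'I_2 -> Prop) :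
  P (@Ordinal 2 0 isT) -> P (@Ordinal 2 1 isT) -> forall k, P k.
Proof.
move=> H0 H1 [m hn].
do 2 (case: m hn => [|m] hn; first by rewrite (bool_irrelevance hn isT)).
by exfalso; move: hn; rewrite !ltnS ltn0.
Qed.
Section Oct.
Variable F : fieldType.
Lemma omul_0 (x y : 'rV[F]_8) : (omul x y)@@0 = x@@0 * y@@0 - x@@1 * y@@1 - x@@2 * y@@2 - x@@3 * y@@3 - x@@4 * y@@4 - x@@5 * y@@5 - x@@6 * y@@6 - x@@7 * y@@7.
Proof. by rewrite mxE sum8 /=; rewrite !sum8 /oct_coef /=; ring. Qed.

Lemma omul_1 (x y : 'rV[F]_8) : (omul x y)@@1 = x@@0 * y@@1 + x@@1 * y@@0 + x@@2 * y@@3 - x@@3 * y@@2 + x@@4 * y@@5 - x@@5 * y@@4 - x@@6 * y@@7 + x@@7 * y@@6.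
Proof. by rewrite mxE sum8 /=; rewrite !sum8 /oct_coef /=; ring. Qed.

Lemma omul_2 (x y : 'rV[F]_8) : (omul x y)@@2 = x@@0 * y@@2 - x@@1 * y@@3 + x@@2 * y@@0 + x@@3 * y@@1 + x@@4 * y@@6 + x@@5 * y@@7 - x@@6 * y@@4 - x@@7 * y@@5.
Proof. by rewrite mxE sum8 /=; rewrite !sum8 /oct_coef /=; ring. Qed.

Lemma omul_3 (x y : 'rV[F]_8) : (omul x y)@@3 = x@@0 * y@@3 + x@@1 * y@@2 - x@@2 * y@@1 + x@@3 * y@@0 + x@@4 * y@@7 - x@@5 * y@@6 + x@@6 * y@@5 - x@@7 * y@@4.
Proof. by rewrite mxE sum8 /=; rewrite !sum8 /oct_coef /=; ring. Qed.

Lemma omul_4 (x y : 'rV[F]_8) : (omul x y)@@4 = x@@0 * y@@4 - x@@1 * y@@5 - x@@2 * y@@6 - x@@3 * y@@7 + x@@4 * y@@0 + x@@5 * y@@1 + x@@6 * y@@2 + x@@7 * y@@3.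
Proof. by rewrite mxE sum8 /=; rewrite !sum8 /oct_coef /=; ring. Qed.

Lemma omul_5 (x y : 'rV[F]_8) : (omul x y)@@5 = x@@0 * y@@5 + x@@1 * y@@4 - x@@2 * y@@7 + x@@3 * y@@6 - x@@4 * y@@1 + x@@5 * y@@0 - x@@6 * y@@3 + x@@7 * y@@2.
Proof. by rewrite mxE sum8 /=; rewrite !sum8 /oct_coef /=; ring. Qed.

Lemma omul_6 (x y : 'rV[F]_8) : (omul x y)@@6 = x@@0 * y@@6 + x@@1 * y@@7 + x@@2 * y@@4 - x@@3 * y@@5 - x@@4 * y@@2 + x@@5 * y@@3 + x@@6 * y@@0 - x@@7 * y@@1.
Proof. by rewrite mxE sum8 /=; rewrite !sum8 /oct_coef /=; ring. Qed.

Lemma omul_7 (x y : 'rV[F]_8) : (omul x y)@@7 = x@@0 * y@@7 - x@@1 * y@@6 + x@@2 * y@@5 + x@@3 * y@@4 - x@@4 * y@@3 - x@@5 * y@@2 + x@@6 * y@@1 + x@@7 * y@@0.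
Proof. by rewrite mxE sum8 /=; rewrite !sum8 /oct_coef /=; ring. Qed.

Definition tq (p0 p1 p2 p3 : F) (i j : nat) : F :=
 match i, j with
 | 0%N,0%N | 1%N,1%N | 2%N,2%N | 3%N,3%N => 1
 | 4%N,4%N => p0 | 4%N,5%N => p1 | 4%N,6%N => p2 | 4%N,7%N => p3
 | 5%N,4%N => -p1 | 5%N,5%N => p0 | 5%N,6%N => p3 | 5%N,7%N => -p2
 | 6%N,4%N => -p2 | 6%N,5%N => -p3 | 6%N,6%N => p0 | 6%N,7%N => p1
 | 7%N,4%N => -p3 | 7%N,5%N => p2 | 7%N,6%N => -p1 | 7%N,7%N => p0
 | _,_ => 0 end.
Definition Tq p0 p1 p2 p3 : 'M[F]_8 := \matrix_(i, j) tq p0 p1 p2 p3 i j.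
Definition qm0 (a0 a1 a2 a3 b0 b1 b2 b3 : F) := a0*b0 - a1*b1 - a2*b2 - a3*b3.
Definition qm1 (a0 a1 a2 a3 b0 b1 b2 b3 : F) := a0*b1 + a1*b0 + a2*b3 - a3*b2.
Definition qm2 (a0 a1 a2 a3 b0 b1 b2 b3 : F) := a0*b2 - a1*b3 + a2*b0 + a3*b1.
Definition qm3 (a0 a1 a2 a3 b0 b1 b2 b3 : F) := a0*b3 + a1*b2 - a2*b1 + a3*b0.

Lemma TqM p0 p1 p2 p3 q0 q1 q2 q3 :
  Tq p0 p1 p2 p3 *m Tq q0 q1 q2 q3 =
  Tq (qm0 q0 q1 q2 q3 p0 p1 p2 p3) (qm1 q0 q1 q2 q3 p0 p1 p2 p3)
     (qm2 q0 q1 q2 q3 p0 p1 p2 p3) (qm3 q0 q1 q2 q3 p0 p1 p2 p3).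
Proof.
apply/matrixP => i j; move: i j; apply: ord8P; apply: ord8P;
  rewrite !mxE sum8 !mxE /= /qm0 /qm1 /qm2 /qm3; ring.
Qed.

Lemma Tq1 : Tq 1 0 0 0 = 1%:M.
Proof.
apply/matrixP => i j; move: i j; apply: ord8P; apply: ord8P;
  by rewrite !mxE /= ?oppr0.
Qed.

Lemma Tq_tr p0 p1 p2 p3 : \tr (Tq p0 p1 p2 p3) = 4%:R + 4%:R * p0.
Proof. rewrite /mxtrace sum8 !mxE /=; ring. Qed.

Lemma Tq_omul p0 p1 p2 p3 (x y : 'rV[F]_8) :
  p0 ^+ 2 + p1 ^+ 2 + p2 ^+ 2 + p3 ^+ 2 = 1 ->
  omul (x *m Tq p0 p1 p2 p3) (y *m Tq p0 p1 p2 p3) = omul x y *m Tq p0 p1 p2 p3.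
Proof.
move=> hN; apply/rowP; apply: ord8P.
- rewrite [in RHS]mxE sum8 !omul_0 !omul_1 !omul_2 !omul_3 !omul_4 !omul_5 !omul_6 !omul_7 !mxE !sum8 !mxE /=.
  apply/eqP; rewrite -subr_eq0; apply/eqP.
  transitivity ((p0 ^+ 2 + p1 ^+ 2 + p2 ^+ 2 + p3 ^+ 2 - 1) * (-x @@ 4 * y @@ 4 -x @@ 5 * y @@ 5 -x @@ 6 * y @@ 6 -x @@ 7 * y @@ 7)); first ring.
  by rewrite hN subrr mul0r.
- rewrite [in RHS]mxE sum8 !omul_0 !omul_1 !omul_2 !omul_3 !omul_4 !omul_5 !omul_6 !omul_7 !mxE !sum8 !mxE /=.
  apply/eqP; rewrite -subr_eq0; apply/eqP.
  transitivity ((p0 ^+ 2 + p1 ^+ 2 + p2 ^+ 2 + p3 ^+ 2 - 1) * (x @@ 4 * y @@ 5 -x @@ 5 * y @@ 4 -x @@ 6 * y @@ 7 +x @@ 7 * y @@ 6)); first ring.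
  by rewrite hN subrr mul0r.
- rewrite [in RHS]mxE sum8 !omul_0 !omul_1 !omul_2 !omul_3 !omul_4 !omul_5 !omul_6 !omul_7 !mxE !sum8 !mxE /=.
  apply/eqP; rewrite -subr_eq0; apply/eqP.
  transitivity ((p0 ^+ 2 + p1 ^+ 2 + p2 ^+ 2 + p3 ^+ 2 - 1) * (x @@ 4 * y @@ 6 +x @@ 5 * y @@ 7 -x @@ 6 * y @@ 4 -x @@ 7 * y @@ 5)); first ring.
  by rewrite hN subrr mul0r.
- rewrite [in RHS]mxE sum8 !omul_0 !omul_1 !omul_2 !omul_3 !omul_4 !omul_5 !omul_6 !omul_7 !mxE !sum8 !mxE /=.
  apply/eqP; rewrite -subr_eq0; apply/eqP.
  transitivity ((p0 ^+ 2 + p1 ^+ 2 + p2 ^+ 2 + p3 ^+ 2 - 1) * (x @@ 4 * y @@ 7 -x @@ 5 * y @@ 6 +x @@ 6 * y @@ 5 -x @@ 7 * y @@ 4)); first ring.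
  by rewrite hN subrr mul0r.
- rewrite [in RHS]mxE sum8 !omul_0 !omul_1 !omul_2 !omul_3 !omul_4 !omul_5 !omul_6 !omul_7 !mxE !sum8 !mxE /=.
  ring.
- rewrite [in RHS]mxE sum8 !omul_0 !omul_1 !omul_2 !omul_3 !omul_4 !omul_5 !omul_6 !omul_7 !mxE !sum8 !mxE /=.
  ring.
- rewrite [in RHS]mxE sum8 !omul_0 !omul_1 !omul_2 !omul_3 !omul_4 !omul_5 !omul_6 !omul_7 !mxE !sum8 !mxE /=.
  ring.
- rewrite [in RHS]mxE sum8 !omul_0 !omul_1 !omul_2 !omul_3 !omul_4 !omul_5 !omul_6 !omul_7 !mxE !sum8 !mxE /=.
  ring.
Qed.
End Oct.

Section Two.
Variable F : fieldType.
Hypothesis h3 : (3%:R : F) = 0.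
Implicit Types M N X Y : 'M[F]_2.

Definition psi0 M := -(M@2 0 0 + M@2 1 1).
Definition psi1 M := -(M@2 0 0 - M@2 1 1) - (M@2 0 1 + M@2 1 0).
Definition psi2 M := -(M@2 0 0 - M@2 1 1) + (M@2 0 1 + M@2 1 0).
Definition psi3 M := -(M@2 0 1 - M@2 1 0).
Definition d2 M := M@2 0 0 * M@2 1 1 - M@2 0 1 * M@2 1 0.
Definition TM M := Tq (psi0 M) (psi1 M) (psi2 M) (psi3 M).

Ltac cert3 Q := apply/eqP; rewrite -subr_eq0; apply/eqP;
  transitivity (3%:R * Q); [ring | by rewrite h3 mul0r].
Lemma psiM0 M N : psi0 (M *m N) = qm0 (psi0 M) (psi1 M) (psi2 M) (psi3 M) (psi0 N) (psi1 N) (psi2 N) (psi3 N).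
Proof. rewrite /psi0 /psi1 /psi2 /psi3 /qm0 !mxE !sum2 /=. cert3 (- (M@2 0 0) * (N@2 1 1)  + (M@2 0 1) * (N@2 0 1)  + (M@2 1 0) * (N@2 1 0)  - (M@2 1 1) * (N@2 0 0) ). Qed.
Lemma psiM1 M N : psi1 (M *m N) = qm1 (psi0 M) (psi1 M) (psi2 M) (psi3 M) (psi0 N) (psi1 N) (psi2 N) (psi3 N).
Proof. rewrite /psi0 /psi1 /psi2 /psi3 /qm1 !mxE !sum2 /=. cert3 (- (M@2 0 0) * (N@2 0 0)  - (M@2 0 0) * (N@2 0 1)  - (M@2 0 1) * (N@2 1 0)  - (M@2 0 1) * (N@2 1 1)  - (M@2 1 0) * (N@2 0 0)  + (M@2 1 0) * (N@2 0 1)  - (M@2 1 1) * (N@2 1 0)  + (M@2 1 1) * (N@2 1 1) ). Qed.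
Lemma psiM2 M N : psi2 (M *m N) = qm2 (psi0 M) (psi1 M) (psi2 M) (psi3 M) (psi0 N) (psi1 N) (psi2 N) (psi3 N).
Proof. rewrite /psi0 /psi1 /psi2 /psi3 /qm2 !mxE !sum2 /=. cert3 (- (M@2 0 0) * (N@2 0 0)  + (M@2 0 0) * (N@2 0 1)  - (M@2 0 1) * (N@2 1 0)  + (M@2 0 1) * (N@2 1 1)  + (M@2 1 0) * (N@2 0 0)  + (M@2 1 0) * (N@2 0 1)  + (M@2 1 1) * (N@2 1 0)  + (M@2 1 1) * (N@2 1 1) ). Qed.
Lemma psiM3 M N : psi3 (M *m N) = qm3 (psi0 M) (psi1 M) (psi2 M) (psi3 M) (psi0 N) (psi1 N) (psi2 N) (psi3 N).
Proof. rewrite /psi0 /psi1 /psi2 /psi3 /qm3 !mxE !sum2 /=. cert3 ( (M@2 0 0) * (N@2 1 0)  - (M@2 0 1) * (N@2 0 0)  + (M@2 1 0) * (N@2 1 1)  - (M@2 1 1) * (N@2 0 1) ). Qed.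
Lemma psiN M : psi0 M ^+ 2 + psi1 M ^+ 2 + psi2 M ^+ 2 + psi3 M ^+ 2 = d2 M.
Proof. rewrite /psi0 /psi1 /psi2 /psi3 /d2. cert3 (- (M@2 0 0) * (M@2 1 1)  + (M@2 0 0) ^+2 + (M@2 0 1) * (M@2 1 0)  + (M@2 0 1) ^+2 + (M@2 1 0) ^+2 + (M@2 1 1) ^+2). Qed.

Lemma TMM M N : TM M *m TM N = TM (N *m M).
Proof. by rewrite /TM TqM psiM0 psiM1 psiM2 psiM3. Qed.

Lemma TM1 : TM 1%:M = 1%:M.
Proof.
rewrite /TM /psi0 /psi1 /psi2 /psi3 !mxE /= !subrr ?(addr0, oppr0, add0r, subr0).
have -> : - (1 + 1) = 1 :> F by cert3 (-1 : F).
exact: Tq1.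
Qed.

Lemma TM_tr M : \tr (TM M) = 4%:R - 4%:R * (M@2 0 0 + M@2 1 1).
Proof. by rewrite /TM Tq_tr /psi0 mulrN. Qed.

Lemma TM_omul M (x y : 'rV[F]_8) : d2 M = 1 ->
  omul (x *m TM M) (y *m TM M) = omul x y *m TM M.
Proof. by move=> h; apply: Tq_omul; rewrite psiN. Qed.

Lemma d2M M N : d2 (M *m N) = d2 M * d2 N.
Proof. rewrite /d2 !mxE !sum2 /=; ring. Qed.

Lemma d21 : d2 1%:M = 1.
Proof. by rewrite /d2 !mxE /= mulr1 mulr0 subr0. Qed.

Lemma d2X M n : d2 (M ^+ n) = d2 M ^+ n.
Proof.
elim: n => [|n IH]; first by rewrite !expr0 d21.
by rewrite !exprSr -mulmxE d2M IH.
Qed.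

Lemma CH2 M : M *m M = (M@2 0 0 + M@2 1 1) *: M - (d2 M)%:M.
Proof.
apply/matrixP => i j; move: i j; apply: ord2P; apply: ord2P;
  rewrite !mxE !sum2 /= /d2; ring.
Qed.

Definition adj2 M : 'M[F]_2 :=
  \matrix_(i, j) (if (i : nat) == j then (if (i : nat) == 0%N then M@2 1 1 else M@2 0 0)
                   else if (i : nat) == 0%N then - M@2 0 1 else - M@2 1 0).

Lemma adj2K M : adj2 M *m M = (d2 M)%:M.
Proof.
apply/matrixP => i j; move: i j; apply: ord2P; apply: ord2P;
  rewrite !mxE !sum2 !mxE /= /d2; ring.
Qed.

Lemma key_ring (R : ringType) (M N S : R) :
  M * N = N * M -> M * S = S * M -> N * S = S * N ->
  M * M = S * M - 1 -> N * N = S * N - 1 -> (N - M) * (N + M - S) = 0.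
Proof.
move=> hMN hMS hNS hM hN.
rewrite mulrBl !mulrDr !mulrN hN hM -hMN hNS hMS.
set a := S * N; set b := M * N; set c := S * M; clearbody a b c.
by rewrite (addrAC (a - 1)) (addrAC a) subrr add0r (addrC b (c - 1)) (addrAC (c - 1)) (addrAC c) subrr add0r subrr.
Qed.

Lemma unip2 X (r : nat) : d2 X = 1 -> X ^+ r = 1 -> d2 (X - 1) = 0 -> r%:R != 0 :> F ->
  X = 1.
Proof.
move=> hd hr hd1 hr0.
set Y := X - 1.
have htr : Y@2 0 0 + Y@2 1 1 = 0.
  rewrite /Y !mxE /=; move: hd hd1; rewrite /d2 !mxE /= => hd hd1.
  transitivity ((X@2 0 0 * X@2 1 1 - X@2 0 1 * X@2 1 0) - 1 - ((X@2 0 0 - 1) * (X@2 1 1 - 1) - (X@2 0 1 - 0) * (X@2 1 0 - 0))); first ring.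
  by rewrite hd hd1 subrr subr0.
have hY2 : Y * Y = 0.
  have hd1' : d2 Y = 0 by [].
  by rewrite -mulmxE CH2 htr scale0r hd1' raddf0 subr0.
have hX : X = 1 + Y by rewrite /Y addrC subrK.
clearbody Y.
have hXn : forall n, X ^+ n = 1 + Y *+ n.
  elim=> [|n IH]; first by rewrite expr0 mulr0n addr0.
  by rewrite exprSr IH [X in _ * X]hX mulrDl mul1r mulrDr mulr1 mulrnAl hY2 mul0rn addr0 mulrS addrA.
move: hr; rewrite hXn => /eqP; rewrite -subr_eq0 addrC addKr -scaler_nat scaler_eq0 (negbTE hr0) /=.
by move/eqP => hY0; rewrite hX hY0 addr0.
Qed.
End Two.

Lemma frobD_iter (R : nzRingType) (hR : (3 \in [pchar R])%N) (A B : R) k :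
  GRing.comm A B -> (A + B) ^+ (3 ^ k) = A ^+ (3 ^ k) + B ^+ (3 ^ k).
Proof.
move=> hAB; elim: k => [|k IH]; first by rewrite expn0 !expr1.
rewrite expnSr !exprM IH.
have := pFrobenius_autD_comm hR (commrX (3 ^ k) (commr_sym (commrX (3 ^ k) (commr_sym hAB)))).
by rewrite !pFrobenius_autE.
Qed.

Section Three.
Variable F : fieldType.
Hypothesis hc : (3 \in [pchar F])%N.

Lemma pchar_mx2 : (3 \in [pchar 'M[F]_2])%N.
Proof.
rewrite inE /=; apply/eqP.
have -> : (3%:R : 'M[F]_2) = (3%:R : F)%:M by rewrite -(rmorph_nat (@scalar_mx F 2)).
by rewrite (pcharf0 hc) raddf0.
Qed.

Lemma key2 (M : 'M[F]_2) (r k : nat) : d2 M = 1 -> M ^+ r = 1 -> r%:R != 0 :> F ->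
  (M@2 0 0 + M@2 1 1) ^+ (3 ^ k) = M@2 0 0 + M@2 1 1 ->
  M ^+ (3 ^ k).-1 = 1 \/ M ^+ (3 ^ k).+1 = 1.
Proof.
move=> hd hr hr0 htau.
move: htau; set tau := M@2 0 0 + M@2 1 1 => htau.
have hs : (0 < 3 ^ k)%N by rewrite expn_gt0.
have hodd : odd (3 ^ k) by rewrite oddX orbT.
move: hs hodd htau; set s := (3 ^ k)%N => hs hodd htau.
have hcM := pchar_mx2.
set S : 'M[F]_2 := tau%:M.
have hM2 : M * M = S * M - 1.
  by rewrite -mulmxE CH2 -/tau hd -mul_scalar_mx.
have cSM : GRing.comm S M by rewrite /GRing.comm -!mulmxE scalar_mxC.
set N := M ^+ s.
have cMN : GRing.comm M N := commrX s (commr_refl M).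
have cSN : GRing.comm S N := commrX s cSM.
have hN2 : N * N = S * N - 1.
  have e1 : N * N = (M * M) ^+ s by rewrite -expr2 exprAC expr2.
  rewrite e1 hM2 (frobD_iter hcM); last exact: commrN1.
  rewrite exprMn_comm // -signr_odd hodd expr1.
  have -> : S ^+ s = S by rewrite /S -rmorphXn /= htau.
  by [].
have hprod : (N - M) * (N + M - S) = 0.
  apply: key_ring => //; exact: commr_sym.
set A := M ^+ s.-1 - 1.
set B := M ^+ s.+1 - 1.
have hAM : A * M = N - M by rewrite /A mulrBl mul1r -exprSr prednK.
have hMB : M * (N + M - S) = B.
  rewrite mulrBr mulrDr hM2 -exprS -cSM /B.
  by rewrite addrA addrAC addrK.
have hAB : A * B = 0 by rewrite -hMB mulrA hAM hprod.
case: (eqVneq (d2 A) 0) => hdA.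
- left; apply: (@unip2 F _ r) => //.
  + by rewrite d2X hd expr1n.
  + by rewrite exprAC hr expr1n.
- right; apply/eqP; rewrite -subr_eq0 -/B.
  have : (d2 A)%:M * B = 0 by rewrite -adj2K mulmxE -mulrA hAB mulr0.
  rewrite -mulmxE mul_scalar_mx => /eqP.
  by rewrite scaler_eq0 (negbTE hdA).
Qed.
End Three.

Lemma mx_ext (R : ringType) n (A B : 'M[R]_n) :
  (forall v : 'rV[R]_n, v *m A = v *m B) -> A = B.
Proof. by move=> h; apply/row_matrixP => i; rewrite !rowE; exact: h. Qed.

Section Four.
Variable F : finFieldType.
Hypothesis hc : (3 \in [pchar F])%N.
Local Notation G2 := (G2 F).
Implicit Types g h : {perm 'rV[F]_8}.

Definition linp g := forall (a : F) x y, g (a *: x + y) = a *: g x + g y.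
Definition mulp g := forall x y, g (omul x y) = omul (g x) (g y).

Lemma G2P g : reflect (linp g /\ mulp g) (g \in G2).
Proof.
rewrite inE; apply: (iffP andP) => [[/forallP h1 /forallP h2] | [h1 h2]]; split.
- by move=> a x y; apply/eqP; have /forallP/(_ x)/forallP/(_ y) := h1 a.
- by move=> x y; apply/eqP; have /forallP/(_ y) := h2 x.
- by apply/forallP => a; apply/forallP => x; apply/forallP => y; rewrite h1.
- by apply/forallP => x; apply/forallP => y; rewrite h2.
Qed.

Lemma G2_group_set : group_set G2.
Proof.
apply/group_setP; split.
  by apply/G2P; split=> [a x y|x y]; rewrite !perm1.
move=> g h /G2P [lg mg] /G2P [lh mh]; apply/G2P; split=> [a x y|x y]; rewrite !permM.
  by rewrite lg lh.
by rewrite mg mh.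
Qed.

Canonical G2g := Group G2_group_set.

Lemma lin0 g : linp g -> g 0 = 0.
Proof.
move=> lg; have := lg 1 0 0; rewrite !scale1r addr0 => /(congr1 (fun z => z - g 0)).
by rewrite subrr addrK => /esym.
Qed.

Lemma lin_mx g : linp g -> exists Gm : 'M[F]_8, forall v, g v = v *m Gm.
Proof.
move=> lg; exists (\matrix_(i, j) g (delta_mx 0 i) 0 j) => v.
rewrite {1}(row_sum_delta v) mulmx_sum_row.
have -> : \sum_(i < 8) v 0 i *: row i (\matrix_(i, j) g (delta_mx 0 i) 0 j)
          = \sum_(i < 8) v 0 i *: g (delta_mx 0 i).
  by apply: eq_bigr => i _; congr (_ *: _); apply/rowP => j; rewrite !mxE.
apply: (big_rec2 (fun a b => g a = b)); first exact: lin0.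
by move=> i y1 y2 _ <-; rewrite lg.
Qed.

Local Notation cube := (pFrobenius_aut hc).
Definition frobv (v : 'rV[F]_8) : 'rV[F]_8 := map_mx cube v.
Lemma frobv_inj : injective frobv.
Proof. exact: map_mx_inj. Qed.
Definition frobp : {perm 'rV[F]_8} := perm frobv_inj.

Lemma FrobSetE : FrobSet F = [set frobp].
Proof.
apply/setP => g; rewrite !inE; apply/forallP/eqP => [h|->].
  by apply/permP => x; rewrite permE; apply/eqP; exact: h.
by move=> x; rewrite permE.
Qed.

Definition mc (A : 'M[F]_8) : 'M[F]_8 := map_mx cube A.

Lemma frobX_mul k (w : 'rV[F]_8) (A : 'M[F]_8) :
  (frobp ^+ k)%g (w *m A) = (frobp ^+ k)%g w *m iter k mc A.
Proof.
rewrite !permX; elim: k => //= k IH.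
by rewrite !permE IH /frobv map_mxM.
Qed.

Lemma iter_mcM k (A B : 'M[F]_8) : iter k mc (A *m B) = iter k mc A *m iter k mc B.
Proof. by elim: k => //= k IH; rewrite IH /mc map_mxM. Qed.

Lemma iter_mc1 k : iter k mc 1%:M = 1%:M.
Proof. by elim: k => //= k IH; rewrite IH /mc map_mx1. Qed.

Lemma iter_cube k (a : F) : iter k cube a = a ^+ (3 ^ k).
Proof.
elim: k => [|k IH]; first by rewrite expn0 expr1.
by rewrite /= IH pFrobenius_autE expnSr exprM.
Qed.

Lemma iter_mc_tr k (A : 'M[F]_8) : \tr (iter k mc A) = iter k cube (\tr A).
Proof. by elim: k => //= k IH; rewrite /mc trace_map_mx IH. Qed.

Lemma iter_cube_1B k (a : F) : iter k cube (1 - a) = 1 - iter k cube a.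
Proof. by elim: k => //= k IH; rewrite IH rmorphB rmorph1. Qed.

Lemma frobX_entry k (v : 'rV[F]_8) i : (frobp ^+ k)%g v 0 i = iter k cube (v 0 i).
Proof.
rewrite permX; elim: k => //= k IH.
by rewrite permE /frobv mxE IH.
Qed.

Lemma frob_order f : #|F| = (3 ^ f)%N -> (frobp ^+ f = 1)%g.
Proof.
move=> hF; apply/permP => v; rewrite perm1; apply/rowP => i.
by rewrite frobX_entry iter_cube -hF expf_card.
Qed.

Lemma cube_oct i j k : cube (oct_coef F i j k) = oct_coef F i j k.
Proof.
rewrite /oct_coef.
by repeat case: ifP => _; rewrite ?rmorph0 ?rmorph1 ?rmorphN1.
Qed.

Lemma frobv_omul x y : frobv (omul x y) = omul (frobv x) (frobv y).
Proof.
apply/rowP => k; rewrite /frobv !mxE rmorph_sum; apply: eq_bigr => i _.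
rewrite rmorph_sum; apply: eq_bigr => j _.
by rewrite !rmorphM /= cube_oct !mxE.
Qed.

Lemma frobv_lin (a : F) x y : frobv (a *: x + y) = cube a *: frobv x + frobv y.
Proof. by rewrite /frobv map_mxD map_mxZ. Qed.

Lemma frob_norm f : (0 < f)%N -> #|F| = (3 ^ f)%N -> (frobp \in 'N(G2))%g.
Proof.
move=> hf0 hF; rewrite inE; apply/subsetP => _ /imsetP [g Gg ->].
have [lg mg] := G2P g Gg.
have hfr : forall v, frobp v = frobv v by move=> v; rewrite permE.
have hcj : forall v, (g ^ frobp)%g v = frobp (g ((frobp^-1)%g v)).
  by move=> v; rewrite /conjg !permM.
have cube_sur : forall a : F, cube (a ^+ (3 ^ f.-1)) = a.
  move=> a; rewrite pFrobenius_autE -exprM -expnSr.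
  by case: f hf0 hF => [|f'] // _ hF /=; rewrite -hF expf_card.
apply/G2P; split => [a x y|x y]; rewrite !hcj.
- set x' := (frobp^-1)%g x; set y' := (frobp^-1)%g y; set a' := a ^+ (3 ^ f.-1).
  have -> : a *: x + y = frobp (a' *: x' + y').
    by rewrite hfr frobv_lin cube_sur -!hfr /x' /y' !permKV.
  by rewrite permK lg !hfr frobv_lin cube_sur.
- set x' := (frobp^-1)%g x; set y' := (frobp^-1)%g y.
  have -> : omul x y = frobp (omul x' y').
    by rewrite hfr frobv_omul -!hfr /x' /y' !permKV.
  by rewrite permK mg hfr frobv_omul -!hfr.
Qed.

Lemma A0hat_sub f : (0 < f)%N -> #|F| = (3 ^ f)%N -> A0hat F \subset (G2 * <[frobp]>)%g.
Proof.
move=> hf0 hF.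
have nG : (<[frobp]> \subset 'N(G2g))%g by rewrite cycle_subG; exact: frob_norm hf0 hF.
rewrite -(norm_joinEr nG) /A0hat FrobSetE gen_subG subUset joing_subl /=.
by rewrite sub1set; apply: (subsetP (joing_subr _ _)); exact: cycle_id.
Qed.

End Four.

Lemma zs_pow (f r k : nat) : zsigmondy_3_2f f r -> (0 < k < f)%N ->
  (r %| (3 ^ k).-1)%N \/ (r %| (3 ^ k).+1)%N -> False.
Proof.
case=> pr [h2f hm] /andP [k0 kf] hdiv.
apply: (hm (2 * k)%N).
  by rewrite muln_gt0 k0 /= ltn_pmul2l.
have hd : (r %| (3 ^ k) ^ 2 - 1 ^ 2)%N.
  rewrite subn_sqr; rewrite -subn1 -[(3 ^ k).+1]addn1 in hdiv.
  by case: hdiv => h; [apply: dvdn_mulr | apply: dvdn_mull].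
apply/eqP; rewrite eqn_mod_dvd ?expn_gt0 // mulnC expnM.
by rewrite exp1n in hd.
Qed.

Section Five.
Variable F : finFieldType.
Variable f : nat.
Hypothesis hF : #|F| = (3 ^ f)%N.
Hypothesis hf : (1 < f)%N.
Variable r : nat.
Hypothesis hr : zsigmondy_3_2f f r.

Lemma hc : (3 \in [pchar F])%N.
Proof. by apply: (card_finPcharP hF). Qed.

Lemma h3 : (3%:R : F) = 0.
Proof. exact: pcharf0 hc. Qed.

Lemma hf0 : (0 < f)%N.
Proof. exact: ltnW hf. Qed.

Lemma r_GL : (r %| #|'GL_2[F]%g|)%N.
Proof.
case: hr => pr [h2f hm].
rewrite card_GL // big_ltn // big_ltn // big_geq // muln1.
apply: dvdn_mull; apply: dvdn_mull.
have -> : (#|F| ^ 2 = 3 ^ (2 * f))%N by rewrite hF -expnM mulnC.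
by rewrite -eqn_mod_dvd ?expn_gt0 // h2f.
Qed.

Lemma r_ne3 : r%:R != 0 :> F.
Proof.
case: hr => pr [h2f hm].
apply/negP => /eqP h.
have : (3 %| r)%N by rewrite (dvdn_pcharf hc) h.
rewrite dvdn_prime2 // => /eqP r3.
move: h2f; rewrite -r3 => h2f.
have : (3 %| 3 ^ (2 * f))%N by rewrite dvdn_exp // muln_gt0 hf0.
by rewrite /dvdn h2f.
Qed.

Section WithX.
Variable x : {'GL_2[F]}.
Hypothesis ox : #[x]%g = r.
Let M : 'M[F]_2 := GLval x.

Lemma valX n : GLval (x ^+ n)%g = M ^+ n.
Proof.
elim: n => [|n IH]; first by [].
by rewrite expgSr GL_ME IH exprSr.
Qed.

Lemma hMr : M ^+ r = 1.
Proof. by rewrite -valX -ox expg_order. Qed.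

Lemma M_zs k : (0 < k < f)%N -> M ^+ (3 ^ k).-1 = 1 \/ M ^+ (3 ^ k).+1 = 1 -> False.
Proof.
move=> hk h; apply: (zs_pow hr hk).
have cv : forall n, M ^+ n = 1 -> (r %| n)%N.
  move=> n hn; rewrite -ox order_dvdn; apply/eqP; apply: val_inj.
  by rewrite /= -/(GLval _) valX hn.
by case: h => h; [left | right]; apply: cv.
Qed.

Lemma hd2 : d2 M = 1.
Proof.
case: hr => pr [h2f hm].
have hdr : d2 M ^+ r = 1 by rewrite -d2X hMr d21.
have hd0 : d2 M != 0.
  apply/eqP => h0.
  have : GLval (x * x^-1)%g = M *m GLval (x^-1)%g by rewrite GL_MxE.
  rewrite mulgV GL_1E => /(congr1 (@d2 F)); rewrite d21 d2M h0 mul0r => /eqP.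
  by rewrite oner_eq0.
have hq : (0 < #|F|)%N by rewrite hF expn_gt0.
have hdq : d2 M ^+ (#|F|.-1) = 1.
  apply: (mulfI hd0); rewrite mulr1 -exprS prednK //.
  exact: expf_card.
have cop : coprime r (#|F|.-1).
  rewrite prime_coprime // hF; apply/negP => hdv.
  apply: (hm f); first by rewrite hf0 /= -{1}(mul1n f) ltn_pmul2r // hf0.
  apply/eqP; rewrite eqn_mod_dvd ?expn_gt0 // subn1 //.
have [a _ ha] := Bezoutl (#|F|.-1) (prime_gt0 pr).
move: ha; rewrite (eqnP cop) => /dvdnP [b hb].
have e1 : d2 M ^+ (1 + a * #|F|.-1) = d2 M by rewrite exprD expr1 mulnC exprM hdq expr1n mulr1.
by rewrite -e1 hb mulnC exprM hdr expr1n.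
Qed.

Let Mi : 'M[F]_2 := GLval (x^-1)%g.

Lemma hMiM : Mi *m M = 1%:M.
Proof. by change (GLval (x^-1)%g *m GLval x = 1%:M); rewrite -GL_MxE mulVg. Qed.

Definition tfun (v : 'rV[F]_8) := v *m TM M.
Lemma tK : cancel tfun (fun v => v *m TM Mi).
Proof. by move=> v; rewrite /tfun -mulmxA (TMM h3) hMiM (TM1 h3) mulmx1. Qed.
Definition tp : {perm 'rV[F]_8} := perm (can_inj tK).

Lemma tpE v : tp v = v *m TM M.
Proof. by rewrite permE. Qed.

Lemma tp_G2 : tp \in G2 F.
Proof.
apply/G2P; split => [a u w|u w]; rewrite !tpE.
  by rewrite mulmxDl scalemxAl.
by rewrite (TM_omul h3) // hd2.
Qed.

Lemma tp_r : (tp ^+ r = 1)%g.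
Proof.
apply/permP => v; rewrite permX perm1.
have : forall n, iter n tp v = v *m TM (M ^+ n).
  elim=> [|n IH] /=; first by rewrite expr0 (TM1 h3) mulmx1.
  by rewrite tpE IH -mulmxA (TMM h3); congr (_ *m TM _); rewrite exprS.
by move=> ->; rewrite hMr (TM1 h3) mulmx1.
Qed.

Lemma main_centr (y : {perm 'rV[F]_8}) : y \in A0hat F -> commute y tp -> y \in G2 F.
Proof.
move=> yA cy.
have := subsetP (A0hat_sub hc hf0 hF) y yA.
case/mulsgP => g z gG zC hy; subst y.
case/cycleP: zC => i hz; subst z.
rewrite -(expg_mod _ (frob_order hc hF)) in cy *.
set k := (i %% f)%N in cy *.
have kf : (k < f)%N by rewrite ltn_pmod // hf0.
case: (posnP k) => k0.
  by rewrite k0 expg0 mulg1.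
exfalso; apply: (M_zs (k := k)); first by rewrite k0 kf.
set zk := (frobp hc ^+ k)%g in cy.
have /G2P [lg mg] := gG.
have [Gm hGm] := lin_mx lg.
have giG : (g^-1)%g \in G2 F by rewrite groupV.
have /G2P [lgi mgi] := giG.
have [Gi hGi] := lin_mx lgi.
have hGiGm : Gi *m Gm = 1%:M.
  apply: mx_ext => v; rewrite mulmxA -hGi -hGm permKV mulmx1 //.
have hGmGi : Gm *m Gi = 1%:M.
  apply: mx_ext => v; rewrite mulmxA -hGm -hGi permK mulmx1 //.
set T := TM M.
have hz : forall w (A : 'M[F]_8), zk (w *m A) = zk w *m iter k (mc hc) A.
  by move=> w A; rewrite /zk frobX_mul.
have hcv : forall v, zk (v *m Gm) *m T = zk (v *m T *m Gm).
  move=> v.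
  have := congr1 (fun s : {perm 'rV[F]_8} => s v) cy.
  by rewrite /= !permM !tpE hGm -/T hGm.
set Gk := iter k (mc hc) Gm; set Gik := iter k (mc hc) Gi; set Tk := iter k (mc hc) T.
have hE : Gk *m T = Tk *m Gk.
  apply: mx_ext => w.
  have := hcv ((zk^-1)%g w).
  rewrite !hz permKV => h; rewrite !mulmxA; exact: h.
have hGG : Gik *m Gk = 1%:M by rewrite -iter_mcM hGiGm iter_mc1.
have hGG' : Gk *m Gik = 1%:M by rewrite -iter_mcM hGmGi iter_mc1.
have htr : \tr Tk = \tr T.
  have -> : Tk = Gk *m T *m Gik by rewrite hE -mulmxA hGG' mulmx1.
  by rewrite mxtrace_mulC mulmxA hGG mul1mx.
have h4 : (4%:R : F) = 1.
  by rewrite -[4%N]/(3 + 1)%N natrD h3 add0r.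
move: htr; rewrite /Tk iter_mc_tr /T TM_tr h4 mul1r iter_cube_1B => /eqP.
rewrite -subr_eq0 opprB addrC addrA subrK subr_eq0 => /eqP htau.
apply: (key2 hc hd2 hMr r_ne3).
by rewrite -(iter_cube hc) -htau.
Qed.

End WithX.
End Five.

Local Close Scope ring_scope.

Theorem lemma5p8 (F : finFieldType) (f : nat) (hF : #|F| = (3 ^ f)%N) (hf : (1 < f)%N)
  (phi : {perm 'rV[F]_8}) (hphi : phi \in FieldAuts F) (hphiprime : prime #[phi]%g)
  (r : nat) (hr : zsigmondy_3_2f f r)
  (R : {group {perm 'rV[F]_8}}) (hR : (R \in 'Syl_r(G2 F))%g) :
  ('C_(A0hat F)(R) \subset G2 F)%g.
Proof.
have pr : prime r by case: hr.
have [x _ ox] := Cauchy pr (r_GL hF hr).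
set t := tp hF x.
have tG : t \in G2 F := tp_G2 hF hf hr ox.
have hsyl : (r.-Sylow(G2g F) R)%g by move: hR; rewrite inE.
have sub : (<[t]> \subset G2g F)%g by rewrite cycle_subG.
have pg : (r.-group <[t]>)%g.
  rewrite /pgroup -orderE; apply: (pnat_dvd _ (pnat_id pr)).
  by rewrite order_dvdn; apply/eqP; exact: tp_r ox.
have [h hG hsub] := Sylow_subJ hsyl sub pg.
apply/subsetP => y; rewrite inE => /andP [yA yC].
have th : (t ^ h^-1 \in R)%g by rewrite -mem_conjg (subsetP hsub) // cycle_id.
have cy : commute y (t ^ h^-1)%g := centP yC _ th.
have cyh : commute (y ^ h)%g t.
  by rewrite /commute -(conjgKV h t) -!conjMg cy.
have hA : h \in A0hat F by apply: mem_gen; rewrite inE hG.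
have yhA : (y ^ h)%g \in A0hat F by rewrite groupJ.
have := main_centr hf hr ox yhA cyh.
by rewrite (groupJr _ hG).
Qed.
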